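(* Let $M$ be a combinatorial $3$-pseudomanifold with vertex set $V=V_1\dot\cup V_2$, and suppose the slicing $S=S_{(V_1,V_2)}$ is a weakly neighborly polyhedral map. For $i=1,2$ let $n_i$ be the number of vertices of $V_i$ that lie in the boundary of $\operatorname{span}(V_i)$ (i.e. that are joined by an edge of $M$ to a vertex of the other part). Then \[ n_1n_2\,(15-n_1n_2-n_1-n_2)=12\,\chi(S). \]
   Context: A combinatorial $3$-pseudomanifold is a finite pure $3$-dimensional simplicial complex in which the link of every vertex is a combinatorial surface. $\operatorname{span}(W)$ denotes the induced subcomplex on a vertex set $W$. A function $f:M\to\mathbb{R}$ is regular simplexwise linear (rsl) if it is linear on every simplex and takes pairwise distinct values on the vertices. Given a partition $V=V_1\dot\cup V_2$ of the vertex set into nonempty sets, choose an rsl-function $f$ with $f(v)<f(w)$ for all $v\in V_1$, $w\in V_2$ and $x_0$ strictly between $\max f(V_1)$ and $\min f(V_2)$; the slicing $S_{(V_1,V_2)}$ is the polyhedral surface $f^{-1}(x_0)$, whose facets are the triangles and quadrilaterals obtained by intersecting $f^{-1}(x_0)$ with the tetrahedra of $M$ meeting both parts; its vertices are the points where $f^{-1}(x_0)$ meets edges $\langle u,w\rangle$ of $M$ with $u\in V_1$, $w\in V_2$. A polyhedral map is weakly neighborly if any two of its vertices lie in a common face. $\chi$ denotes the Euler characteristic. *)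

(* Defs.v *)
From mathcomp Require Import all_boot all_order all_algebra.
Set Implicit Arguments. Unset Strict Implicit. Unset Printing Implicit Defensive.
Import Order.TTheory GRing.Theory Num.Theory.

Section Defs.
Variable T : finType.

Definition surf_vertices (K : {set {set T}}) : {set T} := \bigcup_(t in K) t.

Definition link_adj (K : {set {set T}}) (x : T) : rel T :=
  fun a b => [&& x != a, x != b, a != b & [set x; a; b] \in K].

Definition link_vertex (K : {set {set T}}) (x a : T) : bool :=
  (a != x) && [exists t in K, (x \in t) && (a \in t)].

Definition skel_adj (K : {set {set T}}) : rel T :=
  fun a b => (a != b) && [exists t in K, (a \in t) && (b \in t)].

Definition comb_surface (K : {set {set T}}) : Prop :=
  [/\ K != set0,
      (forall t, t \in K -> #|t| = 3),
      (forall (e t : {set T}), t \in K -> e \subset t -> #|e| = 2 ->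
          #|[set t' in K | e \subset t']| = 2),
      (forall x a b, x \in surf_vertices K -> link_vertex K x a ->
          link_vertex K x b -> connect (link_adj K x) a b)
    & (forall a b, a \in surf_vertices K -> b \in surf_vertices K ->
          connect (skel_adj K) a b)].

Definition vertices (M : {set {set T}}) : {set T} := \bigcup_(F in M) F.

Definition is_face (M : {set {set T}}) (s : {set T}) : bool :=
  (s != set0) && [exists F in M, s \subset F].
Definition is_edge (M : {set {set T}}) (e : {set T}) : bool :=
  (#|e| == 2) && is_face M e.
Definition is_triangle (M : {set {set T}}) (t : {set T}) : bool :=
  (#|t| == 3) && is_face M t.

Definition vlink (M : {set {set T}}) (v : T) : {set {set T}} :=
  [set F :\ v | F in [set F in M | v \in F]].

Definition comb_3_pseudomanifold (M : {set {set T}}) : Prop :=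
  [/\ M != set0,
      (forall F, F \in M -> #|F| = 4)
    & (forall v, v \in vertices M -> comb_surface (vlink M v))].

(* ---------- the slicing S_(V1, V2), V2 = complement of V1 ---------- *)
Definition crosses (V1 : {set T}) (s : {set T}) : bool :=
  (s :&: V1 != set0) && (s :\: V1 != set0).

(* vertices of the slicing: edges <u,w> of M with u in V1, w in V2 *)
Definition slice_vertices (M : {set {set T}}) (V1 : {set T}) : {set {set T}} :=
  [set e | is_edge M e && crosses V1 e].
(* edges of the slicing: triangles of M meeting both parts *)
Definition slice_edges (M : {set {set T}}) (V1 : {set T}) : {set {set T}} :=
  [set t | is_triangle M t && crosses V1 t].
(* faces (triangles/quadrilaterals) of the slicing: tetrahedra meeting both parts *)
Definition slice_faces (M : {set {set T}}) (V1 : {set T}) : {set {set T}} :=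
  [set F in M | crosses V1 F].

Definition slice_cell_vertices (M : {set {set T}}) (V1 : {set T}) (s : {set T})
  : {set {set T}} := [set e in slice_vertices M V1 | e \subset s].

Definition slice_euler (M : {set {set T}}) (V1 : {set T}) : int :=
  (#|slice_vertices M V1|%:Z - #|slice_edges M V1|%:Z + #|slice_faces M V1|%:Z)%R.

Definition slice_polyhedral_map (M : {set {set T}}) (V1 : {set T}) : Prop :=
  forall F G, F \in slice_faces M V1 -> G \in slice_faces M V1 -> F != G ->
    let I := slice_cell_vertices M V1 F :&: slice_cell_vertices M V1 G in
    #|I| <= 1 \/
    exists2 t, t \in slice_edges M V1 &
      [/\ t \subset F, t \subset G & I = slice_cell_vertices M V1 t].

Definition slice_weakly_neighborly (M : {set {set T}}) (V1 : {set T}) : Prop :=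
  forall e1 e2 : {set T}, e1 \in slice_vertices M V1 -> e2 \in slice_vertices M V1 ->
    exists2 F, F \in slice_faces M V1 & (e1 \subset F) && (e2 \subset F).

(* vertices of A joined by an edge of M to a vertex outside A
   (= vertices of A in the boundary of span(A)) *)
Definition boundary_count (M : {set {set T}}) (A : {set T}) : nat :=
  #|[set v in A | [exists w in ~: A, is_edge M [set v; w]]]|.

End Defs.

(* Main.v *)
Require Import Defs.
From mathcomp Require Import all_boot all_order all_algebra zify ring.
Import Order.TTheory GRing.Theory Num.Theory.
Set Implicit Arguments. Unset Strict Implicit. Unset Printing Implicit Defensive.

Lemma card_sum (I : finType) (X : {set I}) (P : pred I) :
  #|[set x in X | P x]| = \sum_(x in X) (P x : nat).
Proof.
rewrite -sum1_card big_mkcond /= [RHS]big_mkcond /=.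
apply: eq_bigr => x _; rewrite !inE; by case: (x \in X); case: (P x).
Qed.

Lemma dcount (I J : finType) (X : {set I}) (Y : {set J}) (R : I -> J -> bool) :
  \sum_(x in X) #|[set y in Y | R x y]| = \sum_(y in Y) #|[set x in X | R x y]|.
Proof.
under eq_bigr do rewrite card_sum.
rewrite exchange_big /=.
by apply: eq_bigr => y _; rewrite card_sum.
Qed.

Section P.
Variables (T : finType) (M : {set {set T}}) (V1 : {set T}).
Hypothesis H4 : forall F, F \in M -> #|F| = 4.
Hypothesis Hwn : slice_weakly_neighborly M V1.

Definition A := [set v in V1 | [exists w in ~: V1, is_edge M [set v; w]]].
Definition B := [set v in ~: V1 | [exists w in ~: ~: V1, is_edge M [set v; w]]].

Lemma AV1 a : a \in A -> a \in V1.
Proof. by rewrite inE => /andP[]. Qed.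
Lemma BV2 b : b \in B -> b \notin V1.
Proof. by rewrite !inE => /andP[]. Qed.

Lemma crossesP (s : {set T}) : reflect (exists a b, [/\ a \in s, a \in V1, b \in s & b \notin V1]) (crosses V1 s).
Proof.
apply: (iffP andP) => [[/set0Pn[a] ha /set0Pn[b] hb]|[a [b [sa av bs bv]]]].
  move: ha hb; rewrite !inE => /andP[? ?] /andP[? ?]; by exists a, b.
by split; apply/set0Pn; [exists a | exists b]; rewrite !inE ?sa ?av ?bs ?bv.
Qed.

Lemma crosses_sub (s s' : {set T}) : s \subset s' -> crosses V1 s -> crosses V1 s'.
Proof.
move=> ss /crossesP[a [b [? ? ? ?]]]; apply/crossesP; exists a, b.
by split => //; apply: (subsetP ss).
Qed.

Lemma is_face_sub F (s : {set T}) : F \in M -> s \subset F -> s != set0 -> is_face M s.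
Proof. by move=> FM sF s0; rewrite /is_face s0 /=; apply/existsP; exists F; rewrite FM. Qed.

Lemma pair_eq (e : {set T}) a b : #|e| = 2 -> a \in e -> b \in e -> a != b -> e = [set a; b].
Proof.
move=> he ae be ab; apply/eqP; rewrite eq_sym eqEcard subUset !sub1set ae be /=.
by rewrite he cards2 ab.
Qed.

Lemma pair_neq a b : a \in V1 -> b \notin V1 -> a != b.
Proof. by move=> ha hb; apply: contraNneq hb => <-. Qed.

Lemma edge_sub F a b : F \in M -> a \in F -> b \in F -> a != b -> is_edge M [set a; b].
Proof.
move=> FM aF bF ab; rewrite /is_edge cards2 ab /=.
apply: (is_face_sub FM); first by rewrite subUset !sub1set aF bF.
by apply/set0Pn; exists a; rewrite !inE eqxx.
Qed.

Lemma edge_sv a b : a \in V1 -> b \notin V1 -> is_edge M [set a; b] -> [set a; b] \in slice_vertices M V1.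
Proof.
move=> av bv he; rewrite inE he /=; apply/crossesP; exists a, b.
by rewrite !inE !eqxx orbT.
Qed.

Lemma edgeAB a b : a \in A -> b \in B -> is_edge M [set a; b].
Proof.
rewrite !inE setCK => /andP[av /exists_inP[b' b'v eab']] /andP[bv /exists_inP[a' a'v eba']].
rewrite inE in b'v.
have s1 := edge_sv av b'v eab'.
have s2 : [set a'; b] \in slice_vertices M V1.
  by apply: edge_sv => //; rewrite setUC.
have [F] := Hwn s1 s2; rewrite inE => /andP[FM _] /andP[].
rewrite !subUset !sub1set => /andP[aF _] /andP[_ bF].
by apply: (edge_sub FM) => //; apply: pair_neq.
Qed.

Lemma commonF a a' b b' : a \in A -> a' \in A -> b \in B -> b' \in B ->
  exists2 F, F \in M & [&& a \in F, a' \in F, b \in F & b' \in F].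
Proof.
move=> aA a'A bB b'B.
have s1 := edge_sv (AV1 aA) (BV2 bB) (edgeAB aA bB).
have s2 := edge_sv (AV1 a'A) (BV2 b'B) (edgeAB a'A b'B).
have [F] := Hwn s1 s2; rewrite inE => /andP[FM _] /andP[].
rewrite !subUset !sub1set => /andP[aF bF] /andP[a'F b'F].
by exists F => //; rewrite aF a'F bF b'F.
Qed.


Lemma pair_inj a b a' b' : a \in V1 -> b \notin V1 -> a' \in V1 -> b' \notin V1 ->
  [set a; b] = [set a'; b'] -> a = a' /\ b = b'.
Proof.
move=> av bv a'v b'v E.
have : a \in [set a'; b'] by rewrite -E !inE eqxx.
have : b \in [set a'; b'] by rewrite -E !inE eqxx orbT.
rewrite !inE => /orP[/eqP bE|/eqP ->] /orP[/eqP ->|/eqP aE] //.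
- by move: bv; rewrite bE a'v.
- by move: bv; rewrite bE a'v.
- by move: b'v; rewrite -aE av.
Qed.

Lemma sv_elim e : e \in slice_vertices M V1 ->
  exists a b, [/\ a \in V1, b \notin V1, e = [set a; b] & is_edge M e].
Proof.
rewrite inE => /andP[he /crossesP[a [b [ae av be bv]]]].
exists a, b; split => //; apply: pair_eq => //; last by apply: pair_neq.
by move: he => /andP[/eqP].
Qed.

Lemma setX_inj (P Q : {set T}) : P \subset V1 -> Q \subset ~: V1 ->
  {in setX P Q &, injective (fun p : T * T => [set p.1; p.2])}.
Proof.
move=> PV QV [a b] [a' b'] /setXP[ha hb] /setXP[ha' hb'] /= E.
have hb2 : b \notin V1 by have := subsetP QV _ hb; rewrite inE.
have hb2' : b' \notin V1 by have := subsetP QV _ hb'; rewrite inE.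
by have [-> ->] := pair_inj (subsetP PV _ ha) hb2 (subsetP PV _ ha') hb2' E.
Qed.

Lemma sv_cv F (s : {set T}) : F \in M -> s \subset F ->
  #|[set e in slice_vertices M V1 | e \subset s]| = #|s :&: V1| * #|s :\: V1|.
Proof.
move=> FM sF.
have -> : [set e in slice_vertices M V1 | e \subset s] =
    [set [set p.1; p.2] | p in setX (s :&: V1) (s :\: V1)].
  apply/setP => e; rewrite inE; apply/andP/imsetP.
  - case=> /sv_elim[a [b [av bv -> _]]]; rewrite subUset !sub1set => /andP[ae be].
    by exists (a, b) => //; rewrite !inE ae av be bv.
  - case=> [[a b]] /setXP[]; rewrite !inE => /andP[ae av] /andP[bv be] -> /=.
    rewrite subUset !sub1set ae be; split => //.
    have := edge_sv av bv; rewrite inE; apply.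
    by apply: (edge_sub FM); [apply: (subsetP sF)|apply: (subsetP sF)|apply: pair_neq].
rewrite card_in_imset ?cardsX //; apply: setX_inj; first exact: subsetIr.
by apply/subsetP => x; rewrite !inE => /andP[].
Qed.

Lemma sv_card : #|slice_vertices M V1| = #|A| * #|B|.
Proof.
have -> : slice_vertices M V1 = [set [set p.1; p.2] | p in setX A B].
  apply/setP => e; apply/idP/imsetP.
  - case/sv_elim=> a [b [av bv -> he]].
    exists (a, b) => //; apply/setXP; split.
    + by rewrite inE av /=; apply/exists_inP; exists b; rewrite ?inE.
    + rewrite inE !inE bv /=; apply/exists_inP; exists a; rewrite ?inE ?negbK //.
      by rewrite setUC.
  - case=> [[a b]] /setXP[ha hb] -> /=.
    by apply: edge_sv; [apply: AV1|apply: BV2|apply: edgeAB].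
rewrite card_in_imset ?cardsX //; apply: setX_inj; apply/subsetP => x.
  by apply: AV1.
by move=> /BV2; rewrite inE.
Qed.

Lemma ext_card (e : {set T}) (P : pred {set T}) : #|e| = 2 ->
  #|[set t : {set T} | [&& e \subset t, #|t| == 3 & P t]]| = #|[set v | (v \notin e) && P (v |: e)]|.
Proof.
move=> he.
have -> : [set t : {set T} | [&& e \subset t, #|t| == 3 & P t]] =
    [set v |: e | v in [set v | (v \notin e) && P (v |: e)]].
  apply/setP => t; rewrite inE; apply/idP/imsetP.
  - case/and3P=> et /eqP t3 Pt.
    have : #|t :\: e| == 1 by rewrite cardsD (setIidPr et) t3 he.
    case/cards1P=> v tv.
    have tE : t = v |: e by rewrite -(setID t e) (setIidPr et) tv setUC.
    exists v => //; rewrite inE -tE Pt andbT.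
    have : v \in t :\: e by rewrite tv set11.
    by rewrite inE => /andP[].
  - case=> v; rewrite inE => /andP[ve Pv] ->.
    by rewrite subsetUr Pv cardsU1 ve he.
rewrite card_in_imset // => v v'; rewrite !inE => /andP[ve _] /andP[v'e _] E.
have : v \in v' |: e by rewrite -E setU11.
by rewrite in_setU1 (negbTE ve) orbF => /eqP.
Qed.

Lemma sv_AB e : e \in slice_vertices M V1 -> exists a b, [/\ a \in A, b \in B & e = [set a; b]].
Proof.
case/sv_elim=> a [b [av bv -> he]]; exists a, b; split => //.
  by rewrite inE av /=; apply/exists_inP; exists b; rewrite ?inE.
rewrite inE !inE bv /=; apply/exists_inP; exists a; rewrite ?inE ?negbK //.
by rewrite setUC.
Qed.

Lemma AB0 : A :&: B = set0.
Proof.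
apply/setP => x; rewrite !inE; by case: (x \in V1); rewrite /= ?andbF.
Qed.

Lemma tri_of_e e : e \in slice_vertices M V1 ->
  #|[set t in slice_edges M V1 | e \subset t]| = #|A| + #|B| - 2.
Proof.
move=> esv; have [a [b [aA bB eE]]] := sv_AB esv.
have ab : a != b by apply: pair_neq; [apply: (AV1 aA)|apply: (BV2 bB)].
have he : #|e| = 2 by rewrite eE cards2 ab.
have -> : [set t in slice_edges M V1 | e \subset t] =
   [set t : {set T} | [&& e \subset t, #|t| == 3 & is_face M t]].
  apply/setP => t; rewrite !inE /is_triangle.
  case et: (e \subset t); rewrite ?andbF //=.
  have -> : crosses V1 t.
    by apply: (crosses_sub et); move: esv; rewrite inE => /andP[].
  by rewrite !andbT.
rewrite ext_card //.
have -> : [set v | (v \notin e) && is_face M (v |: e)] = (A :|: B) :\: e.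
  apply/setP => v; rewrite in_set in_setD in_setU; case ve: (v \in e); rewrite /= ?andbF //.
  apply/idP/idP.
  - case/andP=> _ /existsP[F /andP[FM]]; rewrite eE !subUset !sub1set => /andP[vF /andP[aF bF]].
    case vV: (v \in V1).
    + apply/orP; left; rewrite inE vV /=; apply/exists_inP; exists b.
        by rewrite inE; apply: BV2.
      by apply: (edge_sub FM) => //; apply: pair_neq => //; apply: BV2.
    + apply/orP; right; rewrite inE inE vV /=; apply/exists_inP; exists a.
        by rewrite setCK; apply: AV1.
      apply: (edge_sub FM) => //; apply: contraFneq vV => ->; exact: AV1.
  - move=> vAB.
    have [F FM /and3P[vF aF bF]] : exists2 F, F \in M & [&& v \in F, a \in F & b \in F].
      case/orP: vAB => [vA|vB].
      + have [F FM /and4P[h1 h2 h3 h4]] := commonF vA aA bB bB.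
        by exists F => //; rewrite h1 h2 h3.
      + have [F FM /and4P[h1 h2 h3 h4]] := commonF aA aA vB bB.
        by exists F => //; rewrite h1 h3 h4.
    apply: (is_face_sub FM); first by rewrite eE !subUset !sub1set vF aF bF.
    by apply/set0Pn; exists v; rewrite setU11.
rewrite cardsD (setIidPr _); last by rewrite eE subUset !sub1set !in_setU aA bB orbT.
by rewrite cardsU AB0 cards0 subn0 he.
Qed.

Lemma se_elim t : t \in slice_edges M V1 ->
  [/\ #|t| = 3, crosses V1 t & exists2 F, F \in M & t \subset F].
Proof.
rewrite inE /is_triangle => /andP[/andP[/eqP t3 /andP[_ /exists_inP[F FM tF]]] ct].
by split => //; exists F.
Qed.

Lemma cross_card (s : {set T}) : crosses V1 s -> 0 < #|s :&: V1| /\ 0 < #|s :\: V1|.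
Proof. by case/andP=> h1 h2; rewrite !card_gt0. Qed.

Lemma e_in_t t : t \in slice_edges M V1 -> #|[set e in slice_vertices M V1 | e \subset t]| = 2.
Proof.
case/se_elim=> t3 ct [F FM tF]; rewrite (sv_cv FM tF).
have := cardsID V1 t; rewrite t3; have [] := cross_card ct.
move: #|_ :&: _| #|_ :\: _| => k j; nia.
Qed.

Lemma tri_loc F e : F \in M -> e \in slice_vertices M V1 -> e \subset F ->
  #|[set t in [set t in slice_edges M V1 | t \subset F] | e \subset t]| = 2.
Proof.
move=> FM esv eF.
have he : #|e| = 2 by move: esv; rewrite inE => /andP[/andP[/eqP]].
have ce : crosses V1 e by move: esv; rewrite inE => /andP[].
have -> : [set t in [set t in slice_edges M V1 | t \subset F] | e \subset t] =
    [set t : {set T} | [&& e \subset t, #|t| == 3 & t \subset F]].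
  apply/setP => t; rewrite !inE /is_triangle.
  case et: (e \subset t); rewrite ?andbF //=.
  rewrite (crosses_sub et ce) andbT.
  case tF: (t \subset F); rewrite ?andbF //= !andbT.
  case: (#|t| == 3) => //=; apply: (is_face_sub FM tF).
  apply/set0Pn; have /set0Pn[x xe] : e != set0 by rewrite -card_gt0 he.
  by exists x; apply: (subsetP et).
rewrite ext_card //.
have -> : [set v | (v \notin e) && (v |: e \subset F)] = F :\: e.
  by apply/setP => v; rewrite !inE subUset sub1set eF andbT.
by rewrite cardsD (setIidPr eF) H4 // he.
Qed.

Lemma cF F : F \in M ->
  #|[set t in slice_edges M V1 | t \subset F]| = #|[set e in slice_vertices M V1 | e \subset F]|.
Proof.
move=> FM.
have := dcount [set t in slice_edges M V1 | t \subset F] [set e in slice_vertices M V1 | e \subset F]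
   (fun t e => e \subset t).
rewrite (eq_bigr (fun _ => 2)); last first.
  move=> t; rewrite inE => /andP[tse tF].
  rewrite -(e_in_t tse); apply: eq_card => e; rewrite !inE.
  by case et: (e \subset t); rewrite ?andbF ?andbT //= (subset_trans et tF) andbT.
rewrite [in RHS](eq_bigr (fun _ => 2)); last first.
  by move=> e; rewrite inE => /andP[esv eF]; apply: tri_loc.
rewrite !sum_nat_const => /eqP; rewrite eqn_mul2r /= => /eqP.
by [].
Qed.

Hypothesis Hsurf : forall v, v \in vertices M -> comb_surface (vlink M v).

Lemma tets_of_t t : t \in slice_edges M V1 -> #|[set F in slice_faces M V1 | t \subset F]| = 2.
Proof.
move=> tse; case/se_elim: (tse) => t3 ct [F0 F0M tF0].
have -> : [set F in slice_faces M V1 | t \subset F] = [set F in M | t \subset F].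
  apply/setP => F; rewrite !inE; case tF: (t \subset F); rewrite ?andbF ?andbT //.
  by rewrite (crosses_sub tF ct) andbT.
have /set0Pn[v vt] : t != set0 by rewrite -card_gt0 t3.
have vF0 : v \in F0 := subsetP tF0 v vt.
have vM : v \in vertices M by apply/bigcupP; exists F0.
have [_ _ Hedge _ _] := Hsurf vM.
have h2 : #|t :\ v| = 2 by move: t3; rewrite (cardsD1 v) vt => -[].
have F0l : F0 :\ v \in vlink M v by apply/imsetP; exists F0 => //; rewrite inE F0M vF0.
have := Hedge (t :\ v) (F0 :\ v) F0l (setSD _ tF0) h2.
have -> : [set t' in vlink M v | t :\ v \subset t'] = [set F :\ v | F in [set F in M | t \subset F]].
  apply/setP => t'; rewrite inE; apply/andP/imsetP.
  - case=> /imsetP[G]; rewrite inE => /andP[GM vG] -> tG.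
    exists G => //; rewrite inE GM /=.
    by rewrite -(setD1K vt) -(setD1K vG) setUS.
  - case=> G; rewrite inE => /andP[GM tG] ->; split; last exact: setSD.
    by apply/imsetP; exists G => //; rewrite inE GM (subsetP tG).
rewrite card_in_imset // => G G'; rewrite !inE => /andP[_ tG] /andP[_ tG'] E.
by rewrite -(setD1K (subsetP tG v vt)) E setD1K // (subsetP tG').
Qed.

Lemma y_card : #|[set F in slice_faces M V1 | #|F :&: V1| == 2]| =
   'C(#|A|, 2) * 'C(#|B|, 2).
Proof.
rewrite -!cards_draws -cardsX.
set PA := [set P : {set T} | P \subset A & #|P| == 2].
set PB := [set P : {set T} | P \subset B & #|P| == 2].
have -> : setX PA PB = [set (F :&: V1, F :\: V1) | F in [set F in slice_faces M V1 | #|F :&: V1| == 2]].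
  apply/setP => -[P Q]; apply/idP/imsetP.
  - case/setXP; rewrite !inE => /andP[PA2 /cards2P[a [a' [aa' PE]]]] /andP[QB2 /cards2P[b [b' [bb' QE]]]].
    have aA : a \in A by apply: (subsetP PA2); rewrite PE !inE eqxx.
    have a'A : a' \in A by apply: (subsetP PA2); rewrite PE !inE eqxx orbT.
    have bB : b \in B by apply: (subsetP QB2); rewrite QE !inE eqxx.
    have b'B : b' \in B by apply: (subsetP QB2); rewrite QE !inE eqxx orbT.
    have [F FM /and4P[h1 h2 h3 h4]] := commonF aA a'A bB b'B.
    have PV x : x \in P -> x \in V1 by move=> xP; apply: (@AV1 x); apply: (subsetP PA2).
    have QV x : x \in Q -> x \notin V1 by move=> xQ; apply: (@BV2 x); apply: (subsetP QB2).
    have FE : F = P :|: Q.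
      apply/eqP; rewrite eq_sym eqEcard PE QE !subUset !sub1set h1 h2 h3 h4 /=.
      rewrite H4 // -PE -QE cardsU.
      have -> : P :&: Q = set0.
        apply/setP => x; rewrite !inE; apply/negP => /andP[/PV xv /QV]; by rewrite xv.
      by rewrite cards0 subn0 PE QE !cards2 aa' bb'.
    have E1 : F :&: V1 = P.
      apply/setP => x; rewrite FE !inE.
      case xP: (x \in P); first by rewrite (PV _ xP).
      by case xQ: (x \in Q) => //=; rewrite (negbTE (QV _ xQ)).
    have E2 : F :\: V1 = Q.
      apply/setP => x; rewrite FE !inE.
      case xQ: (x \in Q); first by rewrite (QV _ xQ) orbT.
      by case xP: (x \in P); rewrite /= ?andbF // (PV _ xP).
    exists F; last by rewrite E1 E2.
    rewrite !inE FM E1 PE cards2 aa' andbT /=.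
    by apply/crossesP; exists a, b; rewrite h1 h3 (@AV1 a) // (@BV2 b).
  - case=> F; rewrite !inE => /andP[/andP[FM cF] /eqP k2] [-> ->].
    have j2 : #|F :\: V1| = 2 by have := cardsID V1 F; rewrite (H4 FM) k2 => -[].
    rewrite /= k2 j2 !eqxx !andbT.
    case/crossesP: cF => a [b [aF av bF bv]].
    apply/andP; split; apply/subsetP => x.
    + rewrite in_setI => /andP[xF xv]; rewrite inE xv /=; apply/exists_inP; exists b; first by rewrite inE.
      by apply: (edge_sub FM) => //; apply: pair_neq.
    + rewrite in_setD => /andP[xv xF]; rewrite inE inE xv /=.
      apply/exists_inP; exists a; first by rewrite setCK.
      by apply: (edge_sub FM) => //; apply: contraNneq xv => ->.
rewrite card_in_imset // => F G; rewrite !inE => /andP[/andP[FM _] _] /andP[/andP[GM _] _] [E1 E2].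
by rewrite -(setID F V1) E1 E2 setID.
Qed.

Lemma f1_eq : (2 * #|slice_edges M V1| = #|slice_vertices M V1| * (#|A| + #|B| - 2))%N.
Proof.
have := dcount (slice_vertices M V1) (slice_edges M V1) (fun e t => e \subset t).
rewrite (eq_bigr (fun _ => #|A| + #|B| - 2)%N); last by move=> e; apply: tri_of_e.
rewrite [in RHS](eq_bigr (fun _ => 2%N)); last by move=> t; apply: e_in_t.
by rewrite !sum_nat_const => ->; rewrite mulnC.
Qed.

Lemma f2_eq : (2 * #|slice_edges M V1| =
   3 * #|slice_faces M V1| + #|[set F in slice_faces M V1 | #|F :&: V1| == 2]|)%N.
Proof.
have := dcount (slice_edges M V1) (slice_faces M V1) (fun t F => t \subset F).
rewrite (eq_bigr (fun _ => 2%N)); last by move=> t; apply: tets_of_t.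
rewrite [in RHS](eq_bigr (fun F => 3 + (#|F :&: V1| == 2))%N); last first.
  move=> F; rewrite inE => /andP[FM crF]; rewrite (cF FM) (sv_cv FM (subxx F)).
  have := cardsID V1 F; rewrite (H4 FM); have [] := cross_card crF.
  move: #|_ :&: _| #|_ :\: _| => k j k1 j1 kj.
  have : (k = 1 \/ k = 2 \/ k = 3)%N by lia.
  by case=> [E|[E|E]]; subst k; lia.
rewrite sum_nat_const big_split /= sum_nat_const -card_sum mulnC => ->.
by rewrite mulnC.
Qed.

End P.

Section Alg.
Local Open Scope ring_scope.
Lemma alg (n1 n2 f0 f1 f2 y C1 C2 : nat) :
  f0 = (n1 * n2)%N ->
  (2 * f1 = f0 * (n1 + n2 - 2))%N ->
  (2 * f1 = 3 * f2 + y)%N -> y = (C1 * C2)%N -> (n1 * n1.-1 = 2 * C1)%N -> (n2 * n2.-1 = 2 * C2)%N ->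
  let a := n1%:Z in let b := n2%:Z in
  a * b * (15 - a * b - a - b) = 12 * (f0%:Z - f1%:Z + f2%:Z).
Proof.
move=> h0 h1 h2 h3 h4 h5 a b.
have [n10|n1p] := posnP n1.
  have f10 : f1 = 0%N by move: h1; rewrite h0 n10 /=; lia.
  have f20 : f2 = 0%N by lia.
  by rewrite /a n10 h0 n10 f10 f20 !mul0r.
have [n20|n2p] := posnP n2.
  have f10 : f1 = 0%N by move: h1; rewrite h0 n20 muln0 /=; lia.
  have f20 : f2 = 0%N by lia.
  by rewrite /b n20 h0 n20 f10 f20 muln0 mulr0 !mul0r.
have [m1 E1] : exists m1, n1 = m1.+1 by exists n1.-1; lia.
have [m2 E2] : exists m2, n2 = m2.+1 by exists n2.-1; lia.
subst n1 n2 f0 y; rewrite addSn addnS !subSS subn0 /= in h1 h4 h5.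
have e1 := congr1 Posz h1; have e2 := congr1 Posz h2; 
have e4 := congr1 Posz h4; have e5 := congr1 Posz h5.
rewrite !(PoszM, PoszD) in e1 e2 e4 e5.
rewrite /a /b PoszM.
have -> : 12 * ((m1.+1 : int) * (m2.+1 : int) - (f1 : int) + (f2 : int)) =
   12 * ((m1.+1 : int) * (m2.+1 : int)) - 6 * (2 * (f1 : int)) + 4 * (3 * (f2 : int)) by ring.
have E3 : 3 * (f2 : int) = 2 * (f1 : int) - (C1 : int) * (C2 : int) by rewrite e2 addrK.
rewrite E3.
have -> : forall x : int, 4 * (x - (C1 : int) * (C2 : int)) = 4 * x - (2 * (C1 : int)) * (2 * (C2 : int)).
  by move=> x; ring.
rewrite e1 -e4 -e5.
have Ea : forall m : nat, (m.+1 : int) = (m : int) + 1 by move=> m; rewrite -addn1 PoszD.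
rewrite !Ea.
ring.
Qed.

End Alg.

Unset Implicit Arguments. Set Strict Implicit.
Local Open Scope ring_scope.

Theorem lemma5p4 (T : finType) (M : {set {set T}}) (V1 : {set T}) :
  comb_3_pseudomanifold M ->
  vertices M = [set: T] ->
  V1 != set0 -> ~: V1 != set0 ->
  slice_polyhedral_map M V1 ->
  slice_weakly_neighborly M V1 ->
  let n1 := (boundary_count M V1)%:Z in
  let n2 := (boundary_count M (~: V1))%:Z in
  n1 * n2 * (15 - n1 * n2 - n1 - n2) = 12 * slice_euler M V1.
Proof.
move=> [_ HM4 Hlk] _ _ _ _ Hwn n1 n2.
have eA : boundary_count M V1 = #|A M V1| by [].
have eB : boundary_count M (~: V1) = #|B M V1| by [].
rewrite /n1 /n2 eA eB /slice_euler.
have hC : forall n : nat, (n * n.-1 = 2 * 'C(n, 2))%N.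
  by move=> n; rewrite -mul_bin_diag bin1.
exact: (alg (@sv_card T M V1 Hwn) (@f1_eq T M V1 Hwn) (@f2_eq T M V1 HM4 Hlk) (@y_card T M V1 HM4 Hwn) (hC _) (hC _)).
Qed.
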